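(* Let $k$ be a unital commutative ring, $n$ a positive integer, and let $\varepsilon\in k$ be invertible. Then there exist isomorphisms of graded $k$-modules \[\operatorname{Tor}_{\star}^{\mathcal{PR}_n(\varepsilon)}(\mathbf{1},\mathbf{1})\cong\begin{cases}k&\star=0\\0&\star>0\end{cases}\quad\text{and}\quad\operatorname{Ext}^{\star}_{\mathcal{PR}_n(\varepsilon)}(\mathbf{1},\mathbf{1})\cong\begin{cases}k&\star=0\\0&\star>0.\end{cases}\]
   Context: A rook $n$-diagram is a graph on vertices $1,\dots,n$ (left column, top to bottom) and $\bar1,\dots,\bar n$ (right column), drawn in the rectangle they span, each of whose connected components is either an isolated vertex or a single edge joining a left vertex to a right vertex (a propagating edge); it is planar if no two edges cross. The rook algebra $\mathcal{R}_n(\varepsilon)$ is the free $k$-module on rook $n$-diagrams with product: identify the right column of $d_1$ with the left column of $d_2$ (middle column); let $\beta$ be the number of isolated vertices in the middle column; let $d_3$ join two outer vertices iff they are joined by a path; $d_1d_2=\varepsilon^\beta d_3$. The planar rook algebra $\mathcal{PR}_n(\varepsilon)$ is its subalgebra spanned by planar rook $n$-diagrams. The augmentation $\tau$ sends diagrams with $n$ propagating edges to $1$ and all others to $0$; $\mathbf{1}$ is $k$ with the algebra acting via $\tau$. *)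

(* Defs.v *)
From HB Require Import structures.
From mathcomp Require Import all_boot all_order all_algebra.
Set Implicit Arguments. Unset Strict Implicit. Unset Printing Implicit Defensive.
Import GRing.Theory.
Local Open Scope ring_scope.

(* A rook n-diagram is encoded as a partial injection f : 'I_n -> option 'I_n :
   f i = Some a  iff left vertex i+1 is joined to right vertex a+1 (0-based). *)
Definition rook_fun n (f : {ffun 'I_n -> option 'I_n}) : bool :=
  [forall i, forall j, ((f i != None) && (f i == f j)) ==> (i == j)].

Definition planar_fun n (f : {ffun 'I_n -> option 'I_n}) : bool :=
  [forall i : 'I_n, forall j : 'I_n, (i < j)%N ==>
     if f i is Some a then (if f j is Some b then (a < b)%N else true) else true].

Definition planar_rook n (f : {ffun 'I_n -> option 'I_n}) : bool :=
  rook_fun f && planar_fun f.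

(* Planar rook n-diagrams: the k-basis of PR_n(eps). *)
Definition PRdiag n := {f : {ffun 'I_n -> option 'I_n} | planar_rook f}.

(* Concatenation d1 d2 (d1 on the left, d2 on the right). *)
Definition comp_fun n (f1 f2 : {ffun 'I_n -> option 'I_n}) : {ffun 'I_n -> option 'I_n} :=
  [ffun i => obind f2 (f1 i)].

Lemma comp_planar_rook n (f1 f2 : {ffun 'I_n -> option 'I_n}) :
  planar_rook f1 -> planar_rook f2 -> planar_rook (comp_fun f1 f2).
Proof.
move=> /andP [/forallP R1 /forallP P1] /andP [/forallP R2 /forallP P2].
apply/andP; split.
- apply/forallP => i; apply/forallP => j; apply/implyP => /andP [].
  rewrite !ffunE.
  case E1i: (f1 i) => [a|] //= Ha; case E1j: (f1 j) => [b|] //=.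
  + move=> /eqP Hab.
    have : a == b.
      have := forallP (R2 a) b; rewrite Ha Hab eqxx /=; by apply.
    move=> /eqP Eab; subst b.
    have := forallP (R1 i) j; rewrite E1i E1j eqxx /=; by apply.
  + by move=> /eqP Hn; rewrite Hn in Ha.
- apply/forallP => i; apply/forallP => j; apply/implyP => Hij.
  rewrite !ffunE.
  have := forallP (P1 i) j; rewrite Hij /=.
  case: (f1 i) => [a|] //=; case: (f1 j) => [b|] //= Hab; last by case: (f2 a).
  have := forallP (P2 a) b; rewrite Hab /=; by [].
Qed.

(* The diagram d3 in d1 d2 = eps^beta d3. *)
Definition dmul n (d1 d2 : PRdiag n) : PRdiag n :=
  exist _ (comp_fun (val d1) (val d2)) (comp_planar_rook (valP d1) (valP d2)).

(* beta: number of isolated vertices in the middle column. *)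
Definition nfloat n (d1 d2 : PRdiag n) : nat :=
  #|[pred j : 'I_n | [forall i, val d1 i != Some j] && (val d2 j == None)]|.

Definition aug (R : pzRingType) n (d : PRdiag n) : R :=
  if [forall i, val d i != None] then 1 else 0.

(* Since PR_n(eps) is k-free on the finite set of planar rook
   diagrams, PR_n^{(x)q} is k-free on q-tuples of diagrams; chains (resp. cochains)
   are k-valued functions on q-tuples of diagrams. *)
Definition chain (R : pzRingType) n q := {ffun q.-tuple (PRdiag n) -> R}.

(* Coefficient of e_s in d(e_t), t = (a_1,...,a_{q+1}):
   d(a_1|...|a_{q+1}) = tau(a_1) (a_2|...|a_{q+1})
      + sum_{i=1}^{q} (-1)^i (a_1|...|a_i a_{i+1}|...|a_{q+1})
      + (-1)^{q+1} tau(a_{q+1}) (a_1|...|a_q). *)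
Definition bar_coef (R : comPzRingType) n (eps : R) q
    (t : (q.+1).-tuple (PRdiag n)) (s : q.-tuple (PRdiag n)) : R :=
  let x0 := thead t in
  aug R (thead t) * ((behead t == s :> seq (PRdiag n)) : nat)%:R
  + \sum_(j < q)
      (-1) ^+ j.+1 * eps ^+ nfloat (nth x0 t j) (nth x0 t j.+1)
      * ((take j t ++ dmul (nth x0 t j) (nth x0 t j.+1) :: drop j.+2 t
           == s :> seq (PRdiag n)) : nat)%:R
  + (-1) ^+ q.+1 * aug R (nth x0 t q) * ((take q t == s :> seq (PRdiag n)) : nat)%:R.

(* Differential of k (x)_A Bar(A) (x)_A ... computing Tor^A(1,1):  C_{q+1} -> C_q. *)
Definition bar_d (R : comPzRingType) n (eps : R) q (x : chain R n q.+1) : chain R n q :=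
  [ffun s => \sum_t x t * bar_coef eps t s].

(* Coboundary of Hom_A(Bar(A), 1) computing Ext_A(1,1):  C^q -> C^{q+1}. *)
Definition bar_delta (R : comPzRingType) n (eps : R) q (f : chain R n q) : chain R n q.+1 :=
  [ffun t => \sum_s bar_coef eps t s * f s].

(* Main.v *)
Require Import Defs.
From HB Require Import structures.
From mathcomp Require Import all_boot all_order all_algebra.
From mathcomp Require Import zify ring.
Import GRing.Theory.
Local Open Scope ring_scope.
Set Implicit Arguments. Unset Strict Implicit.

Section E.
Variables (n : nat).

Definition idS_fun (S : {set 'I_n}) : {ffun 'I_n -> option 'I_n} :=
  [ffun i => if i \in S then None else Some i].

Lemma idS_pr (S : {set 'I_n}) : planar_rook (idS_fun S).
Proof.
apply/andP; split.
- apply/forallP => i; apply/forallP => j; apply/implyP.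
  rewrite !ffunE; case: (i \in S); case: (j \in S) => //=.
- apply/forallP => i; apply/forallP => j; apply/implyP => Hij.
  rewrite !ffunE; case: (i \in S); case: (j \in S) => //=.
Qed.

Definition idS (S : {set 'I_n}) : PRdiag n := exist _ (idS_fun S) (idS_pr S).

Lemma sum_pick (R : pzSemiRingType) (X : PRdiag n) (F : PRdiag n -> R) :
  \sum_D (D == X)%:R * F D = F X.
Proof.
rewrite (bigD1 X) //= eqxx mul1r big1 ?addr0 // => D /negbTE ->.
by rewrite mul0r.
Qed.

Lemma sum_pick' (R : pzSemiRingType) (X : PRdiag n) (F : PRdiag n -> R) :
  \sum_D F D * (D == X)%:R = F X.
Proof.
rewrite (bigD1 X) //= eqxx mulr1 big1 ?addr0 // => D /negbTE ->.
by rewrite mulr0.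
Qed.

Lemma aug_idS (R : pzRingType) S : aug R (idS S) = (S == set0)%:R.
Proof.
rewrite /aug; case: eqP => [->|/eqP HS].
  by rewrite ifT //; apply/forallP => i; rewrite /= ffunE in_set0.
rewrite ifF //; apply/negbTE/forallP => H.
case/set0Pn: HS => i Hi; move: (H i); by rewrite /= ffunE Hi.
Qed.

Variables (R : comPzRingType) (eps e' : R).
Hypothesis Hee : eps * e' = 1.

Definition ecoef (D : PRdiag n) : R :=
  \sum_(S : {set 'I_n}) (- e') ^+ #|S| * (D == idS S)%:R.

Lemma E1 : \sum_D ecoef D * aug R D = 1.
Proof.
rewrite /ecoef.
under eq_bigr => D _ do rewrite mulr_suml.
rewrite exchange_big /=.
under eq_bigr => S _ do (under eq_bigr => D _ do rewrite -mulrA; rewrite -mulr_sumr sum_pick aug_idS).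
rewrite (bigD1 set0) //= eqxx cards0 expr0 mul1r big1 ?addr0 // => S /negbTE ->.
by rewrite mulr0.
Qed.

End E.

Set Implicit Arguments. Unset Strict Implicit.

Section E2.
Variables (n : nat).

Lemma nfloat_idS (S : {set 'I_n}) (a : PRdiag n) :
  nfloat (idS S) a = #|[pred j | (j \in S) && (val a j == None)]|.
Proof.
apply: eq_card => j; rewrite !inE; congr (_ && _).
apply/forallP/idP => [H|Hj i].
  apply/negPn/negP => Hj; move: (H j); by rewrite /= ffunE (negbTE Hj) eqxx.
rewrite /= ffunE; case: ifP => //= Hi; apply/eqP => -[E]; subst; by rewrite Hj in Hi.
Qed.

Lemma nfloat_U1 (S : {set 'I_n}) (a : PRdiag n) j0 :
  j0 \notin S -> val a j0 = None ->
  nfloat (idS (j0 |: S)) a = (nfloat (idS S) a).+1.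
Proof.
move=> HS Ha; rewrite !nfloat_idS (cardD1 j0) !inE eqxx Ha eqxx /= add1n; congr _.+1.
apply: eq_card => j; rewrite !inE; case: eqP => [->|_] //=.
by rewrite (negbTE HS).
Qed.

Lemma dmul_U1 (S : {set 'I_n}) (a : PRdiag n) j0 :
  val a j0 = None -> dmul (idS (j0 |: S)) a = dmul (idS S) a.
Proof.
move=> Ha; apply: val_inj; apply/ffunP => i; rewrite /= !ffunE !inE.
by case: eqP => //= ->; case: ifP.
Qed.

Lemma total_id (a : PRdiag n) : (forall i, val a i != None) -> a = idS set0.
Proof.
move=> Ht.
have Hb : forall i, exists b, val a i = Some b.
  by move=> i; move: (Ht i); case: (val a i) => [b|] // _; exists b.
have Hmono : forall (i j b c : 'I_n), (i < j)%N -> val a i = Some b -> val a j = Some c -> (b < c)%N.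
  move=> i j b c Hij Hi Hj; case/andP: (valP a) => _ /forallP P.
  by move: (forallP (P i) j); rewrite Hij Hi Hj.
have Lo : forall k (i : 'I_n) b, (k <= i)%N -> val a i = Some b -> (k <= b)%N.
  elim=> [//|k IH] i b Hki Hi.
  have Hi1 : (i.-1 < n)%N by case: i Hki {Hi} => /= i'; lia.
  case: (Hb (Ordinal Hi1)) => c Hc.
  have := IH _ _ _ Hc; rewrite /= => /(_ ltac:(lia)) Hkc.
  have := Hmono _ _ _ _ (_ : (Ordinal Hi1 < i)%N) Hc Hi; rewrite /= => /(_ ltac:(lia)).
  lia.
have Hi : forall k (i : 'I_n) b, (i + k < n)%N -> val a i = Some b -> (b + k < n)%N.
  elim=> [i b _ _|k IH i b Hki Hi]; first by rewrite addn0.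
  have Hi1 : (i.+1 < n)%N by lia.
  case: (Hb (Ordinal Hi1)) => c Hc.
  have := IH _ _ _ Hc; rewrite /= => /(_ ltac:(lia)) Hkc.
  have := Hmono _ _ _ _ (_ : (i < Ordinal Hi1)%N) Hi Hc; rewrite /= => /(_ ltac:(lia)).
  lia.
apply: val_inj; apply/ffunP => i; rewrite /= ffunE in_set0.
case: (Hb i) => b Hab; rewrite Hab; congr Some; apply: val_inj => /=.
have := Lo i i b (leqnn _) Hab; have := Hi (n - i.+1)%N i b _ Hab.
have := ltn_ord i; have := ltn_ord b; lia.
Qed.

Variables (R : comPzRingType) (eps e' : R).
Hypothesis Hee : eps * e' = 1.

Lemma E2 (a D' : PRdiag n) :
  \sum_D ecoef e' D * (eps ^+ nfloat D a * (dmul D a == D')%:R) = aug R a * ecoef e' D'.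
Proof.
rewrite /ecoef.
under eq_bigr => D _ do rewrite mulr_suml.
rewrite exchange_big /=.
under eq_bigr => S _ do (under eq_bigr => D _ do rewrite -mulrA; rewrite -mulr_sumr sum_pick).
rewrite /aug; case: ifP => [/forallP Ht|/negbT].
  rewrite mul1r (total_id Ht); apply: eq_bigr => S _.
  have -> : dmul (idS S) (idS set0) = idS S.
    apply: val_inj; apply/ffunP => i; rewrite /= !ffunE; case: ifP => //= _.
    by rewrite ffunE in_set0.
  have -> : nfloat (idS S) (idS set0) = 0%N.
    rewrite nfloat_idS; apply: eq_card0 => j; rewrite !inE /= ffunE in_set0.
    by rewrite andbF.
  by rewrite expr0 mul1r eq_sym.
rewrite negb_forall => /existsP [j0]; rewrite negbK => /eqP Hj0.
rewrite mul0r (bigID (fun S : {set 'I_n} => j0 \in S)) /=.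
have Hinj : injective (fun S : {set 'I_n} => if j0 \in S then S :\ j0 else j0 |: S).
  apply: (can_inj (g := fun S : {set 'I_n} => if j0 \in S then S :\ j0 else j0 |: S)).
  move=> S /=; case: (boolP (j0 \in S)) => HS.
    rewrite setD11 setD1K //.
  by rewrite setU11 setU1K.
rewrite (reindex_inj Hinj) /=.
have Hc : forall S : {set 'I_n}, (j0 \in (if j0 \in S then S :\ j0 else j0 |: S)) = (j0 \notin S).
  by move=> S; case: ifP => HS; rewrite !inE ?eqxx ?HS.
under eq_bigl => S do rewrite Hc.
rewrite -big_split /= big1 // => S HS.
rewrite (negbTE HS) nfloat_U1 // dmul_U1 // cardsU1 HS add1n !exprS.
transitivity ((- e' * eps + 1) * ((- e') ^+ #|S| * eps ^+ nfloat (idS S) a *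
   (dmul (idS S) a == D')%:R)); first ring.
by rewrite mulNr [e' * _]mulrC Hee addNr mul0r.
Qed.

End E2.

Set Implicit Arguments. Unset Strict Implicit.

Section Core.
Variables (n : nat) (R : comPzRingType) (eps e' : R).
Hypothesis Hee : eps * e' = 1.

Lemma HD (w : seq (PRdiag n)) s0 s' (c : R) :
  \sum_D ecoef e' D * (c * (D :: w == s0 :: s')%:R) = ecoef e' s0 * c * (w == s')%:R.
Proof.
rewrite (eq_bigr (fun D => (D == s0)%:R * (ecoef e' D * c * (w == s')%:R))).
  by rewrite sum_pick.
by move=> D _; rewrite eqseq_cons -mulnb natrM; ring.
Qed.

Lemma core m (u s : (m.+1).-tuple (PRdiag n)) :
  \sum_D ecoef e' D * bar_coef eps [tuple of D :: u] s
  + ecoef e' (thead s) * bar_coef eps u [tuple of behead s] = (u == s)%:R.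
Proof.
case/tupleP: s => s0 s'; case/tupleP: u => u0 u'.
rewrite theadE /bar_coef /= !theadE.
have -> : ([tuple of u0 :: u'] == [tuple of s0 :: s']) = (u0 :: u' == s0 :: s') by [].
have Hmid : forall D, \sum_(i < m) (-1)^+(bump 0 i).+1 * eps^+nfloat (nth D (u0::u') (0+i)) (nth D u' (0+i)) * (D :: take (0+i) (u0::u') ++ dmul (nth D (u0::u') (0+i)) (nth D u' (0+i)) :: drop (bump 0 i) u' == s0::s')%:R
  = - \sum_(i < m) (-1) ^+ i.+1 * eps ^+ nfloat (nth u0 (u0 :: u') i) (nth u0 u' i) * (D :: (take i (u0 :: u') ++
       dmul (nth u0 (u0 :: u') i) (nth u0 u' i) :: drop i.+1 u') == s0 :: s')%:R.
  move=> D; rewrite -sumrN; apply: eq_bigr => i _.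
  have Hi := ltn_ord i.
  rewrite /bump leq0n add0n add1n (set_nth_default u0 D (_ : (i < size (u0 :: u'))%N)); last by rewrite /= size_tuple; lia.
  rewrite (set_nth_default u0 D (_ : (i < size u')%N)); last by rewrite size_tuple.
  rewrite exprS; ring.
have Hlast : forall D, nth D (u0 :: u') m = nth u0 (u0 :: u') m.
  by move=> D; apply: set_nth_default; rewrite /= size_tuple.
under eq_bigr => D _ do rewrite big_ord_recl /= theadE Hmid Hlast !mulrDr mulrN mulr_sumr.
rewrite !big_split /= sumrN exchange_big /=.
under eq_bigr => D _ do rewrite mulrA.
rewrite -mulr_suml E1 mul1r.
have HB : \sum_D ecoef e' D * ((-1) ^+ 1 * eps ^+ nfloat D u0 * (dmul D u0 :: drop 0 u' == s0 :: s')%:R)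
   = - ((u' == s')%:R * (aug R u0 * ecoef e' s0)).
  rewrite -(E2 Hee) mulr_sumr -sumrN; apply: eq_bigr => D _.
  rewrite drop0 eqseq_cons -mulnb natrM; ring.
rewrite HB.
under eq_bigr => j _ do rewrite HD.
rewrite HD.
under eq_bigr => j _ do rewrite -mulrA.
rewrite -mulr_sumr.
set X := \sum_(j < m) _.
rewrite exprS; ring.
Qed.
End Core.

Set Implicit Arguments. Unset Strict Implicit.

Lemma sum_cons (R : pzSemiRingType) (T : finType) k (F : (k.+1).-tuple T -> R) :
  \sum_t F t = \sum_D \sum_(w : k.-tuple T) F [tuple of D :: w].
Proof.
rewrite pair_big /=.
rewrite (reindex (fun p : T * k.-tuple T => [tuple of p.1 :: p.2])) //=.
exists (fun t => (thead t, [tuple of behead t])) => [[D w] _|t _] /=.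
  by rewrite theadE; congr pair; apply: val_inj.
by rewrite [RHS]tuple_eta.
Qed.

Lemma behead_cons T k (D : T) (w : k.-tuple T) : [tuple of behead [tuple of D :: w]] = w.
Proof. exact: val_inj. Qed.

Lemma sum_delta (R : pzSemiRingType) (T : finType) (u : T) (F : T -> R) :
  \sum_s (u == s)%:R * F s = F u.
Proof.
rewrite (bigD1 u) //= eqxx mul1r big1 ?addr0 // => s; rewrite eq_sym => /negbTE ->.
by rewrite mul0r.
Qed.

Section Main.
Variables (n : nat) (R : comPzRingType) (eps e' : R).
Hypothesis Hee : eps * e' = 1.

Definition hmap q (x : chain R n q) : chain R n q.+1 :=
  [ffun t : q.+1.-tuple (PRdiag n) => ecoef e' (thead t) * x [tuple of behead t]].
Definition hstar q (g : chain R n q.+1) : chain R n q :=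
  [ffun v : q.-tuple (PRdiag n) => \sum_D ecoef e' D * g [tuple of D :: v]].

Lemma tor_id m (x : chain R n m.+1) s :
  bar_d eps (hmap x) s + hmap (bar_d eps x) s = x s.
Proof.
rewrite /bar_d /hmap !ffunE sum_cons exchange_big /=.
rewrite mulr_sumr -big_split /=.
rewrite -[RHS](sum_delta s (fun u => x u)).
apply: eq_bigr => u _.

rewrite [(s == u)]eq_sym -(core Hee u s) mulrDl; congr (_ + _).
  by rewrite mulr_suml; apply: eq_bigr => D _; rewrite ffunE theadE behead_cons; ring.
by ring.
Qed.

Lemma ext_id m (g : chain R n m.+1) u :
  bar_delta eps (hstar g) u + hstar (bar_delta eps g) u = g u.
Proof.
rewrite /bar_delta /hstar !ffunE.
have -> : \sum_v bar_coef eps u v * [ffun v : m.-tuple (PRdiag n) => \sum_D ecoef e' D * g [tuple of D :: v]] v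
   = \sum_s ecoef e' (thead s) * bar_coef eps u [tuple of behead s] * g s.
  rewrite sum_cons exchange_big; apply: eq_bigr => v _; rewrite ffunE mulr_sumr.
  by apply: eq_bigr => D _; rewrite theadE behead_cons; ring.
rewrite [X in _ + X](eq_bigr (fun D => \sum_s ecoef e' D * (bar_coef eps [tuple of D :: u] s * g s))); last first.
  by move=> D _; rewrite ffunE mulr_sumr.
rewrite exchange_big -big_split /=.
rewrite -[RHS](sum_delta u (fun s => g s)).
apply: eq_bigr => s _.
rewrite -(core Hee u s) mulrDl addrC; congr (_ + _).
by rewrite mulr_suml; apply: eq_bigr => D _; ring.
Qed.

End Main.


Lemma coef0 (R : comPzRingType) n (eps : R) (t : 1.-tuple (PRdiag n)) (s : 0.-tuple (PRdiag n)) :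
  bar_coef eps t s = 0.
Proof.
case/tupleP: t => a t'; rewrite (tuple0 t') (tuple0 s) /bar_coef /= big_ord0 theadE.
rewrite expr1; ring.
Qed.

Theorem theorem7p11 (R : comPzRingType) (n : nat) (eps : R) :
  (0 < n)%N -> (exists e' : R, eps * e' = 1) ->
  (* Tor_0 = C_0 / im d_0  is isomorphic to k *)
  ((exists phi : chain R n 0 -> R,
      (forall (a : R) (x y : chain R n 0),
          phi [ffun s => a * x s + y s] = a * phi x + phi y)
      /\ (forall c : R, exists x, phi x = c)
      /\ (forall x, phi x = 0 <-> exists y : chain R n 1, bar_d eps y = x))
   (* Tor_{q+1} = 0 *)
   /\ (forall q (x : chain R n q.+1),
         (forall s, bar_d eps x s = 0) -> exists y : chain R n q.+2, bar_d eps y = x))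
  /\
  (* Ext^0 = ker delta_0 is isomorphic to k *)
  ((exists psi : R -> chain R n 0,
      (forall a c d : R, psi (a * c + d) = [ffun s => a * psi c s + psi d s])
      /\ injective psi
      /\ (forall f : chain R n 0, (forall t, bar_delta eps f t = 0) <-> exists c, psi c = f))
   (* Ext^{q+1} = 0 *)
   /\ (forall q (f : chain R n q.+1),
         (forall t, bar_delta eps f t = 0) -> exists g : chain R n q, bar_delta eps g = f)).
Proof.
move=> _ [e' Hee]; split; split.
- exists (fun x => x [tuple]); split; first by move=> a x y; rewrite ffunE.
  split; first by move=> c; exists [ffun _ => c]; rewrite ffunE.
  move=> x; split.
  + move=> H0; exists [ffun _ => 0]; apply/ffunP => s.
    rewrite (tuple0 s) H0 ffunE big1 // => t _; by rewrite ffunE mul0r.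
  + move=> [y <-]; rewrite ffunE big1 // => t _; by rewrite coef0 mulr0.
- move=> q x Hx; exists (hmap e' x); apply/ffunP => s.
  have E := tor_id Hee x s; rewrite [hmap e' (bar_d _ _) _]ffunE Hx mulr0 addr0 in E.
  exact E.
- exists (fun c => [ffun _ => c]); split; first by move=> a c d; apply/ffunP => s; rewrite !ffunE.
  split; first by move=> c d /ffunP /(_ [tuple]); rewrite !ffunE.
  move=> f; split => [_|_].
    by exists (f [tuple]); apply/ffunP => s; rewrite ffunE (tuple0 s).
  move=> t; rewrite ffunE big1 // => s _; by rewrite coef0 mul0r.
- move=> q f Hf; exists (hstar e' f); apply/ffunP => t.
  have E := ext_id Hee f t; rewrite [hstar e' (bar_delta _ _) _]ffunE big1 ?addr0 in E.
    exact E.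
  by move=> D _; rewrite Hf mulr0.
Qed.
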